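(* Let $O\in\mathrm{O}(2S)$, let $1\le i\le S$ and $1\le j\le 2S$. Then there exist $W\in\mathrm{SpO}(2S,\mathbb{R})$ and a real number $\lambda\neq 0$ such that $(OW)_{l,2i-1}=\lambda\,(OW)_{l,2i}$ for every row index $l\neq j$; i.e. columns $2i-1$ and $2i$ of $OW$ are proportional with the same nonzero constant in all rows except row $j$.
   Context: Coordinates of $\mathbb{R}^{2S}$ are ordered as $(q_1,p_1,\dots,q_S,p_S)$. Let $\Omega=\bigoplus_{i=1}^S\begin{pmatrix}0&1\\-1&0\end{pmatrix}$. $\mathrm{O}(2S)$ is the orthogonal group and $\mathrm{SpO}(2S,\mathbb{R})$ is the group of real $2S\times2S$ matrices $W$ that are orthogonal and symplectic ($W^T\Omega W=\Omega$). *)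

(* Defs.v *)
From mathcomp Require Import all_boot all_order all_algebra.
From mathcomp Require Import reals.
Set Implicit Arguments. Unset Strict Implicit. Unset Printing Implicit Defensive.
Import GRing.Theory Num.Theory.
Local Open Scope ring_scope.

(* Coordinates of R^{2S} are (q_1,p_1,...,q_S,p_S); 0-based index 2k is q_{k+1},
   2k+1 is p_{k+1}. *)

(* The standard symplectic form Omega = (+)_{k} [[0,1],[-1,0]]. *)
Definition Omega (R : pzRingType) (S : nat) : 'M[R]_(S.*2) :=
  \matrix_(a, b)
    (if ~~ odd a && (b == a.+1 :> nat) then 1
     else if odd a && (b.+1 == a :> nat) then -1 else 0).

Definition orthogonalmx (R : pzRingType) (n : nat) (O : 'M[R]_n) : Prop :=
  O^T *m O = 1%:M.

Definition SpO (R : pzRingType) (S : nat) (W : 'M[R]_(S.*2)) : Prop :=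
  orthogonalmx W /\ W^T *m Omega R S *m W = Omega R S.

(* 0-based column indices of q_{i+1} and p_{i+1} (i.e. columns 2i-1, 2i in 1-based). *)
Lemma colq_proof S (i : 'I_S) : (i.*2 < S.*2)%N.
Proof. by rewrite ltn_double. Qed.
Lemma colp_proof S (i : 'I_S) : (i.*2.+1 < S.*2)%N.
Proof. by rewrite -doubleS leq_double. Qed.
Definition colq S (i : 'I_S) : 'I_(S.*2) := Ordinal (colq_proof i).
Definition colp S (i : 'I_S) : 'I_(S.*2) := Ordinal (colp_proof i).

(* Main.v *)
Require Import Defs.
From mathcomp Require Import all_boot all_order all_algebra.
From mathcomp Require Import reals.
From mathcomp Require Import ring lra zify.
Import GRing.Theory Num.Theory.
Local Open Scope ring_scope.

Lemma OmegaE (R : pzRingType) S (a b : 'I_(S.*2)) :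
  Omega R S a b = if odd a then - ((b.+1 == a :> nat))%:R else ((b == a.+1 :> nat))%:R.
Proof.
rewrite mxE; case: (odd a) => /=; first by case: (_ == _); rewrite ?oppr0.
by case: (_ == _).
Qed.
Lemma Omega_tr (R : pzRingType) S : (Omega R S)^T = - Omega R S.
Proof.
apply/matrixP => a b; rewrite [LHS]mxE [RHS]mxE !OmegaE.
case: a b => [a Ha] [b Hb] /=.
case: (eqVneq b a.+1) => [E|nb] /=.
  subst b.
  have h1 : (a == a.+2) = false by apply/eqP; lia.
  have h2 : (a.+2 == a) = false by apply/eqP; lia.
  rewrite h1 h2 /=. by case: (odd a) => /=; rewrite ?opprK ?oppr0.
case: (eqVneq a b.+1) => [E|na] /=.
  subst a.
  have h2 : (b.+2 == b) = false by apply/eqP; lia.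
  by rewrite /=; case: (odd b) => /=; rewrite ?opprK ?oppr0.
by case: (odd a); case: (odd b); rewrite /= ?oppr0.
Qed.

Lemma even_succ_lt x m : (x < m)%N -> odd m = false -> odd x = false -> (x.+1 < m)%N.
Proof. rewrite leq_eqVlt => /orP [/eqP <-|//] /= h1 h2. by rewrite h2 in h1. Qed.

Lemma Omega_sq (R : pzRingType) S : Omega R S *m Omega R S = -1%:M.
Proof.
apply/matrixP => a c; rewrite !mxE.
case Ha: (odd a).
- have Ha0 : (a.-1 < S.*2)%N by case: a Ha => [[|a'] Ha] //= _; lia.
  rewrite (bigD1 (Ordinal Ha0)) //= big1; last first.
    move=> b /eqP nb; rewrite OmegaE Ha; case: eqP => [E|] ; last by rewrite oppr0 mul0r.
    by case: nb; apply: val_inj => /=; rewrite -E.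
  rewrite addr0 OmegaE Ha OmegaE /=.
  have -> : odd a.-1 = false by case: (a : nat) Ha => [|a'] //=; case: (odd a').
  have ha1 : (a.-1).+1 = a by case: (a : nat) Ha.
  rewrite ha1 eqxx mulN1r.
  case: (eqVneq a c) => [->|nac]; first by rewrite eqxx.
  have -> : ((c : nat) == a) = false by apply/eqP => E; move: nac; rewrite (val_inj E) eqxx.
  by rewrite oppr0.
- have Ha0 : (a.+1 < S.*2)%N.
    by apply: even_succ_lt (ltn_ord a) (odd_double S) Ha.
  rewrite (bigD1 (Ordinal Ha0)) //= big1; last first.
    move=> b /eqP nb; rewrite OmegaE Ha; case: eqP => [E|] ; last by rewrite mul0r.
    by case: nb; apply: val_inj => /=; rewrite E.
  rewrite addr0 OmegaE Ha OmegaE /= Ha /= eqxx mul1r eqSS.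
  by rewrite eq_sym.
Qed.

Section Alg.
Variables (R : realFieldType) (n : nat) (Om : 'M[R]_n).
Hypotheses (HOt : Om^T = - Om) (HOO : Om *m Om = - 1%:M).

Definition J2 : 'M[R]_(1+1) := block_mx 0 1%:M (-1)%:M 0.

Lemma J2tr : J2^T = - J2.
Proof. by rewrite /J2 tr_block_mx opp_block_mx !trmx0 !oppr0 !tr_scalar_mx raddfN /= opprK. Qed.

Lemma J2sq : J2 *m J2 = - 1%:M.
Proof.
rewrite /J2 mulmx_block !mulmx0 !mul0mx !add0r !addr0 mulmx1 mul1mx.
apply/esym; rewrite -raddfN /=; exact: scalar_mx_block.
Qed.

Lemma M_orth (K : 'M[R]_(1+1)) (W : 'M[R]_(1+1,n)) s :
  W *m W^T = s%:M -> K + K^T + s *: (K^T *m K) = 0 ->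
  (1%:M + W^T *m K *m W)^T *m (1%:M + W^T *m K *m W) = 1%:M.
Proof.
move=> HW HK.
have Et : (1%:M + W^T *m K *m W)^T = 1%:M + W^T *m K^T *m W.
  by rewrite raddfD /= trmx1 !trmx_mul trmxK mulmxA.
rewrite Et.
rewrite mulmxDl !mulmxDr !mul1mx mulmx1.
have E : W^T *m K^T *m W *m (W^T *m K *m W) = W^T *m (s *: (K^T *m K)) *m W.
  rewrite !mulmxA -(mulmxA _ W) HW mul_mx_scalar.
  by rewrite -scalemxAr -!scalemxAl !mulmxA.
have H0 : W^T *m K *m W + (W^T *m K^T *m W + W^T *m (s *: (K^T *m K)) *m W) = 0.
  by rewrite addrA -!mulmxDl -!mulmxDr HK mulmx0 mul0mx.
by rewrite E -addrA H0 addr0.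
Qed.

Lemma M_comm (K : 'M[R]_(1+1)) (W : 'M[R]_(1+1,n)) :
  W *m Om = J2 *m W -> K *m J2 = J2 *m K ->
  Om *m (1%:M + W^T *m K *m W) = (1%:M + W^T *m K *m W) *m Om.
Proof.
move=> HW HK.
have E : Om *m W^T = W^T *m J2.
  by rewrite -[Om]trmxK -trmx_mul HOt mulmxN HW linearN /= trmx_mul J2tr mulmxN opprK.
rewrite mulmxDr mulmxDl mulmx1 mul1mx; congr (_ + _).
rewrite !mulmxA E -!mulmxA HW; congr (_ *m _); by rewrite !mulmxA HK.
Qed.

Lemma SpO_of (M : 'M[R]_n) : M^T *m M = 1%:M -> Om *m M = M *m Om ->
  M^T *m Om *m M = Om.
Proof. by move=> H1 H2; rewrite -mulmxA H2 mulmxA H1 mul1mx. Qed.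

Lemma tr11 (A : 'M[R]_1) : A^T = A.
Proof. by apply/matrixP => i j; rewrite !ord1 mxE. Qed.

Lemma quad0 (w : 'rV[R]_n) : w *m Om *m w^T = 0.
Proof.
have h : (w *m Om *m w^T)^T = - (w *m Om *m w^T).
  by rewrite !trmx_mul trmxK HOt mulmxA mulmxN mulNmx.
rewrite tr11 in h.
apply/matrixP => i j; rewrite !ord1 [RHS]mxE.
have := congr1 (fun A : 'M[R]_1 => A 0 0) h; rewrite /= [X in _ = X]mxE.
generalize ((w *m Om *m w^T) 0 0) => x; lra.
Qed.

Definition Wm (w : 'rV[R]_n) : 'M[R]_(1+1, n) := col_mx w (w *m Om).

Lemma Wm_Om w : Wm w *m Om = J2 *m Wm w.
Proof.
rewrite /Wm /J2 mul_col_mx mul_block_col !mul0mx mul1mx add0r addr0.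
by rewrite -mulmxA HOO mulmxN mulmx1 mul_scalar_mx scaleN1r.
Qed.

Lemma Wm_gram w : Wm w *m (Wm w)^T = ((w *m w^T) 0 0)%:M.
Proof.
rewrite /Wm tr_col_mx mul_col_row (scalar_mx_block 1 1).
rewrite -mx11_scalar !trmx_mul HOt !mulNmx !mulmxN !mulmxA quad0 oppr0.
by rewrite -(mulmxA w Om Om) HOO mulmxN mulmx1 mulNmx opprK.
Qed.

Definition Kmx (a b : R) : 'M[R]_(1+1) := a%:M + b *: J2.

Lemma K_comm a b : Kmx a b *m J2 = J2 *m Kmx a b.
Proof.
by rewrite /Kmx mulmxDl mulmxDr mul_scalar_mx mul_mx_scalar -scalemxAl -scalemxAr.
Qed.

Lemma K_tr a b : (Kmx a b)^T = a%:M - b *: J2.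
Proof. by rewrite /Kmx raddfD /= linearZ /= tr_scalar_mx J2tr scalerN. Qed.

Lemma K_trK a b : (Kmx a b)^T *m Kmx a b = (a ^+ 2 + b ^+ 2)%:M.
Proof.
rewrite K_tr /Kmx mulmxBl !mulmxDr !mul_scalar_mx -!scalemxAl -!scalemxAr.
rewrite mul_mx_scalar J2sq !scalerA scale_scalar_mx scalerN scalemx1 (mulrC b a).
by rewrite opprD addrA addrK opprK raddfD /= !expr2.
Qed.

Lemma K_cond a b s : a + a + s * (a ^+ 2 + b ^+ 2) = 0 ->
  Kmx a b + (Kmx a b)^T + s *: ((Kmx a b)^T *m Kmx a b) = 0.
Proof.
move=> h; rewrite K_trK K_tr /Kmx scale_scalar_mx addrACA subrr addr0.
by rewrite -!raddfD /= h raddf0.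
Qed.

Lemma rM (r w : 'rV[R]_n) a b :
  a * (r *m w^T) 0 0 - b * (r *m (w *m Om)^T) 0 0 = -1 ->
  a * (r *m (w *m Om)^T) 0 0 + b * (r *m w^T) 0 0 = 0 ->
  r *m (1%:M + (Wm w)^T *m Kmx a b *m Wm w) = r - w.
Proof.
move=> h1 h2.
rewrite mulmxDr mulmx1; congr (r + _).
rewrite /Wm tr_col_mx !mulmxA mul_mx_row.
rewrite [r *m w^T]mx11_scalar [r *m (w *m Om)^T]mx11_scalar.
have key : forall p k, a * p - b * k = -1 -> a * k + b * p = 0 ->
    row_mx p%:M k%:M *m Kmx a b = row_mx (-1)%:M 0.
  move=> p k {}h1 {}h2.
  rewrite /Kmx /J2 mulmxDr mul_mx_scalar -scalemxAr mul_row_block.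
  rewrite !mulmx0 add0r addr0 mulmx1 !scale_row_mx add_row_mx -scalar_mxM.
  by rewrite !scale_scalar_mx -!raddfD /= h2 raddf0 mulrN1 mulrN h1.
by rewrite key // mul_row_col mul0mx addr0 mul_scalar_mx scaleN1r.
Qed.
Lemma sq_pos (w : 'rV[R]_n) : w != 0 -> (w *m w^T) 0 0 != 0.
Proof.
apply: contraNneq => h; apply/eqP/matrixP => i j; rewrite ord1 mxE.
move: h; rewrite mxE => h.
have nn : forall l, xpredT l -> 0 <= w 0 l * w^T l 0.
  by move=> l _; rewrite mxE -expr2 sqr_ge0.
have := @psumr_eq0P _ _ xpredT (fun j => w 0 j * w^T j 0) nn h j isT.
by rewrite mxE => /eqP; rewrite mulf_eq0 orbb => /eqP.
Qed.

Lemma alg1 (x y : R) : x ^+ 2 + y ^+ 2 != 0 ->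
  (- x / (x ^+ 2 + y ^+ 2)) + (- x / (x ^+ 2 + y ^+ 2)) +
  (x + x) * ((- x / (x ^+ 2 + y ^+ 2)) ^+ 2 + (y / (x ^+ 2 + y ^+ 2)) ^+ 2) = 0.
Proof. by move=> h; field. Qed.

Lemma alg2 (x y : R) : x ^+ 2 + y ^+ 2 != 0 ->
  (- x / (x ^+ 2 + y ^+ 2)) * x - (y / (x ^+ 2 + y ^+ 2)) * y = -1.
Proof. by move=> h; field. Qed.

Lemma alg3 (x y : R) : x ^+ 2 + y ^+ 2 != 0 ->
  (- x / (x ^+ 2 + y ^+ 2)) * y + (y / (x ^+ 2 + y ^+ 2)) * x = 0.
Proof. by move=> h; field. Qed.

Lemma construct (r t : 'rV[R]_n) : r *m r^T = 1%:M -> t *m t^T = 1%:M ->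
  exists M : 'M[R]_n, M^T *m M = 1%:M /\ Om *m M = M *m Om /\ r *m M = t.
Proof.
move=> hr ht.
have [<-|neq] := eqVneq r t.
  by exists 1%:M; rewrite trmx1 !mulmx1 mul1mx.
pose w := r - t.
have wn0 : w != 0 by rewrite /w subr_eq0.
pose s : R := (w *m w^T) 0 0.
pose p : R := (r *m w^T) 0 0.
pose k : R := (r *m (w *m Om)^T) 0 0.
have hs : s = p + p.
  rewrite /s /p /w raddfB /= !mulmxBl !mulmxBr hr ht.
  have -> : t *m r^T = r *m t^T by rewrite -[t *m r^T]tr11 trmx_mul trmxK.
  by rewrite !mxE; ring.
have sn0 : s != 0 by exact: sq_pos.
have pn0 : p != 0 by apply: contraNneq sn0; rewrite hs => ->; rewrite addr0.
pose D := p ^+ 2 + k ^+ 2.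
have Dn0 : D != 0.
  have h1 : 0 < p ^+ 2 by rewrite lt0r expf_neq0 // sqr_ge0.
  rewrite /D; apply: lt0r_neq0; apply: (Order.POrderTheory.lt_le_trans h1); by rewrite lerDl sqr_ge0.
pose a := - p / D.
pose b := k / D.
exists (1%:M + (Wm w)^T *m Kmx a b *m Wm w).
split; [|split].
- apply: M_orth; first exact: Wm_gram.
  by apply: K_cond; rewrite -/s hs; apply: alg1.
- apply: M_comm; [exact: Wm_Om | exact: K_comm].
- rewrite rM.
  + by rewrite /w opprB addrC subrK.
  + by apply: alg2.
  + by apply: alg3.
Qed.


End Alg.

Lemma e11 (R : pzRingType) : ('e_0 : 'M[R]_1) = 1%:M.
Proof. by apply/matrixP => a b; rewrite !ord1 !mxE. Qed.

Lemma colqp_neq S (i : 'I_S) : colq i != colp i.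
Proof.
apply/eqP => /(congr1 val) /= E.
by move: (congr1 odd E); rewrite /= odd_double.
Qed.

Theorem lemma1 (R : realType) (S : nat) (O : 'M[R]_(S.*2)) (i : 'I_S) (j : 'I_(S.*2)) :
  orthogonalmx O ->
  exists W : 'M[R]_(S.*2), SpO W /\
    exists lam : R, lam != 0 /\
      forall l : 'I_(S.*2), l != j ->
        (O *m W) l (colq i) = lam * (O *m W) l (colp i).
Proof.
rewrite /orthogonalmx => hO.
have hO' : O *m O^T = 1%:M by apply: mulmx1C.
pose r := row j O.
have hr : r *m r^T = 1%:M.
  by rewrite /r rowE trmx_mul mulmxA -(mulmxA _ O) hO' mulmx1 trmx_delta mul_delta_mx e11.
pose t : 'rV[R]_(S.*2) := (3/5) *: 'e_(colq i) - (4/5) *: 'e_(colp i).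
have hne := colqp_neq _ i.
have ht : t *m t^T = 1%:M.
  rewrite /t raddfB /= !linearZ /= !trmx_delta.
  rewrite !scalerN mulmxDl !mulmxDr !mulmxN !mulNmx -!scalemxAl -!scalemxAr.
  rewrite !mul_delta_mx !mul_delta_mx_0 // ?(eq_sym (colp i)) //.
  rewrite !scaler0 !oppr0 addr0 add0r opprK e11 !scalerA -scalerDl.
  rewrite scalemx1.
  have -> : 3 / 5 * (3 / 5) + 4 / 5 * (4 / 5) = 1 :> R by field.
  done.
have [M [hM1 [hM2 hM3]]] := @construct _ _ _ (Omega_tr R S) (Omega_sq R S) r t hr ht.
exists M; split.
  split; first exact: hM1.
  by apply: SpO_of.
exists (4/3); split.
  by rewrite mulf_neq0 // ?invr_eq0 pnatr_eq0.
move=> l hl.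
pose N := O *m M.
have hN : N *m N^T = 1%:M.
  by rewrite /N trmx_mul mulmxA -(mulmxA O) (mulmx1C hM1) mulmx1 hO'.
have hrow : row j N = t by rewrite /N row_mul.
have key : N *m t^T = delta_mx j 0.
  by rewrite -hrow rowE trmx_mul mulmxA hN mul1mx trmx_delta.
have := congr1 (fun A : 'M[R]_(S.*2,1) => A l 0) key.
rewrite /t raddfB /= !linearZ /= !trmx_delta scalerN mulmxDr mulmxN -!scalemxAr -!colE.
rewrite !mxE /= (negbTE hl) /= -/N.
move: (\sum_(k < S.*2) O l k * M k (colq i)) (\sum_(k < S.*2) O l k * M k (colp i)) => x y h.
have -> : x = 5 / 3 * (3 / 5 * x) by field.
have -> : 3 / 5 * x = 4 / 5 * y by apply/eqP; rewrite -subr_eq0; apply/eqP.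
by field.
Qed.
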